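(* Let $N$ and $M$ be large positive parameters, let $\mathcal{X}$ be any subset of $\{1,2,\ldots,10^M\}$, and let $\Delta=\Delta(N)$ be any function with $\Delta\to\infty$. If $M|\mathcal{X}|\Delta^2\le \pi(N)\log M$, then for $\pi(N)\bigl(1+O(1/\Delta)\bigr)$ primes $p\le N$ we have $$\#\{x \bmod p \;:\; x\in\mathcal{X}\}=|\mathcal{X}|\bigl(1+O(\Delta^{-1})\bigr).$$
   Context: $\pi(N)$ denotes the number of primes $p\le N$. $\#\{x \bmod p : x\in\mathcal{X}\}$ is the number of distinct residues modulo $p$ of elements of $\mathcal{X}$. *)

(* Defs.v *)
From mathcomp Require Import all_boot.
From Stdlib Require Import Reals.

Definition prime_pi (N : nat) : nat := count prime (iota 0 N.+1).

Definition nres (X : seq nat) (p : nat) : nat := size (undup [seq x %% p | x <- X]).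

(* Main.v *)
Require Import Defs.
From mathcomp Require Import all_boot zify.
From Stdlib Require Import Reals Lra.

Fixpoint coll (p : nat) (s : seq nat) : nat :=
  match s with [::] => 0 | x :: s' => (x %% p \in [seq y %% p | y <- s']) + coll p s' end.

Definition dd (x y : nat) := (x - y) + (y - x).

Fixpoint pc (p : nat) (s : seq nat) : nat :=
  match s with [::] => 0 | x :: s' => count (fun y => p %| dd x y) s' + pc p s' end.

Lemma nres_coll X p : nres X p + coll p X = size X.
Proof.
rewrite /nres; elim: X => [|x s IH] //=.
case: ifP => H /=.
  by rewrite addnCA IH add1n.
by rewrite add0n addSn IH.
Qed.

Lemma dvd_dd p x y : x %% p = y %% p -> p %| dd x y.
Proof.
move=> h; rewrite /dd.
case: (leqP y x) => hl.
  have -> : y - x = 0 by apply/eqP; rewrite subn_eq0.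
  by rewrite addn0 -eqn_mod_dvd // h.
have -> : x - y = 0 by apply/eqP; rewrite subn_eq0 ltnW.
by rewrite add0n -eqn_mod_dvd ?h // ltnW.
Qed.

Lemma coll_pc p s : coll p s <= pc p s.
Proof.
elim: s => [|x s IH] //=.
apply: leq_add => //.
case E: (x %% p \in _) => //; move/mapP: E => [y ys Hy].
rewrite -has_count; apply/hasP; exists y => //.
exact: dvd_dd.
Qed.

Lemma pow_expn a b : Nat.pow a b = expn a b.
Proof. elim: b => [|b IH] //=. by rewrite expnS IH. Qed.

Lemma prod_dvd d (Q : seq nat) : uniq Q -> all prime Q -> all (fun p => p %| d) Q ->
  \prod_(p <- Q) p %| d.
Proof.
elim: Q => [|q Q IH] /=; first by rewrite big_nil dvd1n.
move=> /andP [qQ uQ] /andP [pq pQ] /andP [dq dQ].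
rewrite big_cons Gauss_dvd ?dq ?IH //.
rewrite prime_coprime // Euclid_dvd_prod // big_has; apply/hasPn => r rQ /=.
rewrite dvdn_prime2 //; last by move/allP: pQ; apply.
by apply/eqP => e; move: qQ; rewrite e rQ.
Qed.

Lemma prod_ge T (Q : seq nat) : all (fun p => T <= p) Q -> expn T (size Q) <= \prod_(p <- Q) p.
Proof.
elim: Q => [|q Q IH] /=; first by rewrite big_nil.
move=> /andP [h1 h2]; rewrite big_cons expnS; exact: leq_mul (IH h2).
Qed.

Lemma count_pair T n d : 1 < T -> 0 < d ->
  count (fun p => p %| d) [seq p <- iota 0 n | prime p && (T <= p)] <= trunc_log T d.
Proof.
move=> T1 d0; apply: trunc_log_max => //.
rewrite -size_filter.
set Q := filter _ _.
have uQ : uniq Q by rewrite !filter_uniq // iota_uniq.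
have hQ : forall p, p \in Q -> [&& prime p, T <= p & p %| d].
  by move=> p; rewrite /Q !mem_filter => /and3P [-> /andP [-> ->]].
apply: (@leq_trans (\prod_(p <- Q) p)).
  by apply: prod_ge; apply/allP => p /hQ /and3P [].
apply: dvdn_leq => //; apply: prod_dvd => //; apply/allP => p /hQ /and3P [] //.
Qed.

Lemma sum_bool (P : seq nat) (b : pred nat) : \sum_(p <- P) (b p : nat) = count b P.
Proof. elim: P => [|p P IH]; by rewrite ?big_nil ?big_cons //= IH. Qed.

Lemma exch (P s : seq nat) (q : nat -> nat -> bool) :
  \sum_(p <- P) count (q p) s = \sum_(y <- s) count (fun p => q p y) P.
Proof.
elim: s => [|y s IH].
  by rewrite big_nil /=; elim: P => [|p P IHP]; rewrite ?big_nil ?big_cons //= -IHP.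
rewrite big_cons -IH -sum_bool -big_split /=; exact: eq_bigr.
Qed.

Lemma sum_le_size (s : seq nat) (f : nat -> nat) K :
  (forall y, y \in s -> f y <= K) -> \sum_(y <- s) f y <= size s * K.
Proof.
elim: s => [|y s IH] h; first by rewrite big_nil.
rewrite big_cons /= mulSn; apply: leq_add; first by apply: h; rewrite mem_head.
by apply: IH => z zs; apply: h; rewrite inE zs orbT.
Qed.

Lemma sum_pc T n B (X : seq nat) : 1 < T -> uniq X -> all (fun x => 1 <= x <= B) X ->
  \sum_(p <- [seq p <- iota 0 n | prime p && (T <= p)]) pc p X
   <= size X * size X * trunc_log T B.
Proof.
move=> T1; elim: X => [|x s IH]; first by rewrite big1.
move=> /= /andP [xs us] /andP [/andP [x1 xB] hs].
rewrite big_split /= exch.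
apply: (@leq_trans (size s * trunc_log T B + size s * size s * trunc_log T B)); last first.
  rewrite -mulnDl leq_mul2r; apply/orP; right; rewrite mulSn mulnS; lia.
apply: leq_add; last exact: IH.
apply: sum_le_size => y ys.
have {ys} [/andP [y1 yB] xy] : 1 <= y <= B /\ x != y.
  split; first by move/allP: hs; apply.
  by apply/eqP => e; move: xs; rewrite e ys.
apply: leq_trans (count_pair T n (dd x y) T1 _) _.
  rewrite /dd; move: xy; rewrite neq_ltn => /orP [] h; lia.
apply: leq_trunc_log; rewrite /dd; lia.
Qed.
Lemma ln_le' x y : (0 < x)%R -> (x <= y)%R -> (ln x <= ln y)%R.
Proof. move=> h0 h; case: (Rle_lt_or_eq_dec _ _ h) => h'; last by rewrite h'; lra.
by apply: Rlt_le; apply: ln_increasing. Qed.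

Lemma ln10 : (ln 10 <= 4)%R.
Proof.
have e1 := exp_ineq1_le 1.
have -> : 4%R = ln (exp 4) by rewrite ln_exp.
apply: ln_le'; first lra.
have -> : 4%R = (1+1+1+1)%R by ring.
rewrite !exp_plus.
have h2 : (2 <= exp 1)%R by lra.
have h4 : (4 <= exp 1 * exp 1)%R by nra.
nra.
Qed.

Lemma ln1x x : (0 <= x)%R -> (ln (1 + x) <= x)%R.
Proof.
move=> h; rewrite -{2}(ln_exp x); apply: ln_le'; first lra.
exact: exp_ineq1_le.
Qed.

Definition goodR (f : nat -> nat) (D r : R) (p : nat) : bool :=
  if Rle_dec (INR (f p) * D) r then true else false.

Lemma badsum (P : seq nat) f D r : (0 < D)%R -> (0 <= r)%R ->
  (INR (count (fun p => ~~ goodR f D r p) P) * r <= D * INR (\sum_(p <- P) f p))%R.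
Proof.
move=> D0 r0; elim: P => [|p P IH]; first by rewrite big_nil /=; lra.
rewrite big_cons.
have -> : count (fun p => ~~ goodR f D r p) (p :: P) = (~~ goodR f D r p) + count (fun p => ~~ goodR f D r p) P by [].
move: IH; set c := count _ P => IH.
rewrite !plus_INR.
have hf := pos_INR (f p).
case E: (goodR f D r p); move: E; rewrite /goodR; case: Rle_dec => h //= _;
  rewrite ?INR_0 ?INR_1.
  nra.
have h' := Rnot_le_lt _ _ h. nra.
Qed.

Lemma count_le3 (L : seq nat) (a b c d : pred nat) :
  (forall x, a x <= b x + c x + d x) -> count a L <= count b L + count c L + count d L.
Proof.
move=> h; elim: L => [|x L IH] //=.
have := h x; lia.
Qed.

Lemma count_small (L : seq nat) T : uniq L -> count (fun p => prime p && (p < T)) L <= T.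
Proof.
move=> uL; rewrite -size_filter -{2}(size_iota 0 T).
apply: uniq_leq_size; first exact: filter_uniq.
by move=> p; rewrite mem_filter mem_iota => /andP [/andP [_ ->] _].
Qed.

Theorem corollary1 :
  exists C : R, (0 < C)%R /\
  exists M0 : nat,
  forall Delta : nat -> R,
    (forall K : R, exists n0 : nat, forall n : nat, (n0 <= n)%N -> (K <= Delta n)%R) ->
  exists N0 : nat,
  forall (N M : nat), (N0 <= N)%N -> (M0 <= M)%N ->
  forall X : seq nat, uniq X ->
    all (fun x => (1 <= x <= 10 ^ M)%N) X ->
    (INR M * INR (size X) * (Delta N) ^ 2 <= INR (prime_pi N) * ln (INR M))%R ->
    exists S : seq nat,
      uniq S /\
      (forall p, p \in S ->
         prime p /\ (p <= N)%N /\
         (Rabs (INR (nres X p) - INR (size X)) <= C * INR (size X) / Delta N)%R) /\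
      (INR (prime_pi N) * (1 - C / Delta N) <= INR (size S))%R.
Proof.
exists 12%R; split; first lra.
exists 2 => Delta HD.
have [n0 Hn0] := HD 1%R.
exists n0 => N M HN HM X uX allX Hyp.
have D1 : (1 <= Delta N)%R := Hn0 N HN.
have D0 : (0 < Delta N)%R by lra.
have Dinv : (Delta N * / Delta N = 1)%R by apply: Rinv_r; lra.
have Dinv0 : (0 < / Delta N)%R by apply: Rinv_0_lt_compat.
have [X0|Xn] := eqVneq (size X) 0.
  exists [seq p <- iota 0 N.+1 | prime p]; split; first by rewrite filter_uniq // iota_uniq.
  split.
    move=> p; rewrite mem_filter mem_iota => /andP [pp /andP [_ pN]]; split=> //; split; first lia.
    move/eqP: X0; rewrite size_eq0 => /eqP ->; rewrite /nres /= Rminus_0_r Rabs_R0.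
unfold Rdiv; nra.
  have -> : size [seq p <- iota 0 N.+1 | prime p] = prime_pi N by rewrite size_filter.
  have h1 := pos_INR (prime_pi N).
  have h2 : (0 <= INR (prime_pi N) * (12 * / Delta N))%R by apply: Rmult_le_pos; lra.
  unfold Rdiv; nra.
have n1 : 1 <= size X by rewrite lt0n.
pose s := Nat.sqrt M.
have [hs1 hs2] : s * s <= M /\ M < s.+1 * s.+1.
  have [h1 h2] := Nat.sqrt_spec M (Nat.le_0_l _); split; [apply/leP | apply/ltP]; exact.
have s1 : 1 <= s by nia.
pose T := s.+1.
have T1 : 1 < T by rewrite /T ltnS.
pose g := goodR (fun p => coll p X) (Delta N) (INR (size X)).
pose L := iota 0 N.+1.
pose P := [seq p <- L | prime p && (T <= p)].
exists [seq p <- L | prime p && (T <= p) && g p].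
split; first by rewrite filter_uniq // iota_uniq.
split.
  move=> p; rewrite mem_filter mem_iota => /andP [/andP [/andP [pp _] gp] /andP [_ pN]].
  split=> //; split; first lia.
  have e := nres_coll X p.
  have eR : INR (nres X p) = (INR (size X) - INR (coll p X))%R by rewrite -e plus_INR; ring.
  rewrite eR.
  have -> : (INR (size X) - INR (coll p X) - INR (size X) = - INR (coll p X))%R by ring.
  rewrite Rabs_Ropp Rabs_pos_eq; last exact: pos_INR.
  move: gp; rewrite /g /goodR; case: Rle_dec => // h _.
  have hc := pos_INR (coll p X).
  have hn := pos_INR (size X).
  unfold Rdiv.
  have : (INR (coll p X) = INR (coll p X) * Delta N * / Delta N)%R by rewrite Rmult_assoc Dinv; ring.
  move=> ->; nra.
have Hsplit := count_le3 L prime (fun p => prime p && (T <= p) && g p)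
   (fun p => prime p && (p < T)) (fun p => prime p && (T <= p) && ~~ g p).
have {Hsplit} Hsplit := Hsplit (fun p => ltac:(case: (prime p) (g p) (leqP T p) => [] [] [] //=)).
have Hsmall := count_small L T (iota_uniq 0 N.+1).
have Hbad : count (fun p => prime p && (T <= p) && ~~ g p) L = count (fun p => ~~ g p) P.
  by rewrite count_filter; apply: eq_count => p /=; rewrite andbC.
rewrite Hbad in Hsplit.
have Hsplit' : prime_pi N <= size [seq p <- L | prime p && (T <= p) && g p]
   + count (fun p => prime p && (p < T)) L + count (fun p => ~~ g p) P.
  by rewrite size_filter; exact: Hsplit.
have HB : (INR (count (fun p => ~~ g p) P) * INR (size X) <= Delta N * INR (\sum_(p <- P) coll p X))%R
  := badsum P (fun p => coll p X) (Delta N) (INR (size X)) D0 (pos_INR _).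
have allX' : all (fun x => 1 <= x <= expn 10 M) X by rewrite -pow_expn.
pose K := trunc_log T (expn 10 M).
have Hsum : \sum_(p <- P) coll p X <= size X * size X * K.
  apply: leq_trans (sum_pc T N.+1 (expn 10 M) X T1 uX allX').
  by apply: leq_sum => p _; exact: coll_pc.
have hK : expn T K <= expn 10 M by apply: trunc_logP => //; rewrite expn_gt0.
have RS : (INR (prime_pi N) <= INR (size [seq p <- L | prime p && leq T p && g p])
   + INR (count (fun p => prime p && ltn p T) L) + INR (count (fun p => ~~ g p) P))%R.
  by rewrite -!plus_INR; apply: le_INR; apply/leP.
have Rsm := le_INR _ _ (elimT leP Hsmall).
have Rsum := le_INR _ _ (elimT leP Hsum).
rewrite !mult_INR in Rsum.
have hK' : (INR T ^ K <= 10 ^ M)%R.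
  have := le_INR _ _ (elimT leP hK); rewrite -!pow_expn !pow_INR.
  by have -> : INR 10 = 10%R by simpl; ring.
have hTr : INR T = (INR s + 1)%R by rewrite /T S_INR.
rewrite hTr in hK' Rsm.
have sr1 : (1 <= INR s)%R by apply: (le_INR 1); apply/leP.
have Rs1 : (INR s * INR s <= INR M)%R by rewrite -mult_INR; apply: le_INR; apply/leP.
have Rs2 : (INR M < (INR s + 1) * (INR s + 1))%R by rewrite -S_INR -mult_INR; apply: lt_INR; apply/ltP.
have M2 : (2 <= INR M)%R by apply: (le_INR 2); apply/leP.
have lnM0 : (0 < ln (INR M))%R.
  rewrite -ln_1; apply: ln_increasing; lra.
have lnT : (ln (INR M) <= 2 * ln (INR s + 1))%R.
  have -> : (2 * ln (INR s + 1) = ln ((INR s + 1) * (INR s + 1)))%R by rewrite ln_mult; lra.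
  apply: ln_le'; lra.
have lnTs : (ln (INR s + 1) <= INR s)%R by rewrite Rplus_comm; apply: ln1x; lra.
have hKl : (INR K * ln (INR s + 1) <= INR M * 4)%R.
  have hp : (0 < INR s + 1)%R by lra.
  have := ln_le' _ _ (pow_lt _ K hp) hK'.
  rewrite !ln_pow; try lra.
  have := ln10; have := pos_INR M; nra.
move: RS Rsm HB Rsum D1 D0 Dinv Dinv0 Rs1 Rs2 M2 lnM0 lnT lnTs hKl Hyp sr1.
set pi := INR (prime_pi N).
set Sz := INR (size _).
set Sm := INR (count _ L).
set Bc := INR (count _ P).
set Sum := INR (\sum_(p <- P) coll p X).
set n := INR (size X).
set D := Delta N.
set Kr := INR K.
set m := INR M.
set sr := INR s.
set l := ln m.
set lT := ln (sr + 1).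
move=> RS Rsm HB Rsum D1 D0 Dinv Dinv0 Rs1 Rs2 M2 lnM0 lnT lnTs hKl Hyp sr1.
have hn : (1 <= n)%R by apply: (le_INR 1); apply/leP.
have Kr0 : (0 <= Kr)%R by apply: pos_INR.
have Bc0 : (0 <= Bc)%R by apply: pos_INR.
have St1 : (Bc <= D * n * Kr)%R.
  apply: (Rmult_le_reg_r n); first lra.
  have : (D * Sum <= D * (n * n * Kr))%R by apply: Rmult_le_compat_l; lra.
  nra.
have St2 : (Kr * l <= 8 * m)%R by nra.
have St3 : (Bc * D <= 8 * pi)%R.
  apply: (Rmult_le_reg_r l) => //.
  have h1 : (Bc * D * l <= D * n * Kr * D * l)%R.
    apply: Rmult_le_compat_r; first lra.
    apply: Rmult_le_compat_r; lra.
  have h2 : (D * n * Kr * D * l <= 8 * (m * n * D ^ 2))%R.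
    have : (0 <= D * n * D)%R by nra.
    nra.
  have h3 : (m * n * D ^ 2 <= pi * l)%R by exact: Hyp.
  nra.
have St4 : ((sr + 1) * D <= 4 * pi)%R.
  apply: (Rmult_le_reg_r l) => //.
  have h1 : ((sr + 1) * l <= 4 * m)%R by nra.
  have h2 : (m * D <= m * n * D ^ 2)%R.
    have : (D <= n * D ^ 2)%R by nra.
    nra.
  have h3 : (m * n * D ^ 2 <= pi * l)%R by exact: Hyp.
  nra.
have pi0 : (0 <= pi)%R by apply: pos_INR.
have : ((pi - Sz) * D <= 12 * pi)%R by nra.
move=> h; unfold Rdiv.
have : (pi * 12 * / D * D = pi * 12)%R by rewrite Rmult_assoc Rinv_l; lra.
nra.
Qed.
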